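(* Let $D\ge 3$ and let $n\ge D+6$ be an even integer. Then topology recognition (even anonymous) is impossible, in any time, for the class of all graphs of size $n$ and diameter $D$ when all nodes receive the empty string as advice; that is, the size of advice needed to perform topology recognition for this class is at least $1$.
   Context: Graphs are finite, simple, undirected, connected, with no node labels; at each node of degree $d$ the incident edges carry distinct port numbers $0,\dots,d-1$ (no coherence between endpoints). Two such graphs are isomorphic if there is a bijection of nodes preserving edges and the port numbers at both endpoints of every edge. Communication model (LOCAL): synchronous rounds, all nodes start simultaneously; in each round every node may send arbitrary messages to all neighbours, receives their messages (knowing the arrival port), and performs arbitrary local computation. Initially a node knows only its degree and its advice. Advice: an oracle knowing the graph assigns each node a binary string; the size of advice is the maximum string length. All nodes run the same deterministic algorithm. Anonymous topology recognition: every node outputs a port-labeled graph isomorphic to $G$. A size $s$ of advice suffices for a class of graphs if there is a deterministic algorithm and, for each graph in the class, an advice assignment with strings of length at most $s$, such that the algorithm accomplishes the task on that graph. *)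

(* Defs.v *)
From mathcomp Require Import all_boot.
Set Implicit Arguments. Unset Strict Implicit. Unset Printing Implicit Defensive.

(* A port-labeled graph: nodes are 0, ..., pg_n - 1; pg_adj v lists the
   neighbours of v in port order: the edge at port i of v leads to
   nth 0 (pg_adj v) i.  The degree of v is size (pg_adj v). *)
Record PGraph := PG { pg_n : nat; pg_adj : nat -> seq nat }.

Fixpoint within (G : PGraph) (k v u : nat) : bool :=
  (u == v) ||
  (if k is k'.+1 then has (fun w => within G k' w u) (pg_adj G v) else false).

Definition valid_pgraph (G : PGraph) : Prop :=
  0 < pg_n G /\
  (forall v, v < pg_n G ->
     [/\ all (fun u => u < pg_n G) (pg_adj G v),
         uniq (pg_adj G v),
         v \notin pg_adj G v &
         forall u, u \in pg_adj G v -> v \in pg_adj G u]) /\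
  (forall u v, u < pg_n G -> v < pg_n G -> within G (pg_n G) u v).

Definition has_diameter (G : PGraph) (D : nat) : Prop :=
  (forall u v, u < pg_n G -> v < pg_n G -> within G D u v) /\
  (exists u v, [/\ u < pg_n G, v < pg_n G & ~~ within G D.-1 u v]).

(* isomorphism preserving edges and the port numbers at both endpoints *)
Definition pg_iso (G H : PGraph) : Prop :=
  pg_n G = pg_n H /\
  exists f : nat -> nat,
    [/\ forall v, v < pg_n G -> f v < pg_n G,
        forall u v, u < pg_n G -> v < pg_n G -> f u = f v -> u = v &
        forall v, v < pg_n G -> pg_adj H (f v) = map f (pg_adj G v)].

(* A deterministic algorithm in the LOCAL model, run identically by all nodes:
   states S, messages M; initial state from (degree, advice); in each round
   a node sends msg s p on its port p, and updates its state from the list of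
   received messages indexed by arrival port; out s = Some H means the node
   outputs H (the first time this happens counts as its output). *)
Record LocalAlg (S M : Type) := {
  la_init : nat -> seq bool -> S;
  la_msg : S -> nat -> M;
  la_step : S -> seq M -> S;
  la_out : S -> option PGraph }.

Fixpoint run (S M : Type) (A : LocalAlg S M) (G : PGraph)
    (adv : nat -> seq bool) (t : nat) : nat -> S :=
  match t with
  | 0 => fun v => la_init A (size (pg_adj G v)) (adv v)
  | t'.+1 => fun v =>
      let st := run A G adv t' in
      la_step A (st v)
        (map (fun u => la_msg A (st u) (index v (pg_adj G u))) (pg_adj G v))
  end.

Definition solves_TR (S M : Type) (A : LocalAlg S M) (G : PGraph)
    (adv : nat -> seq bool) : Prop :=
  forall v, v < pg_n G ->
    exists t H,
      [/\ la_out A (run A G adv t v) = Some H,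
          forall t', t' < t -> la_out A (run A G adv t' v) = None &
          pg_iso G H].

(* Main.v *)
Require Import Defs.
From mathcomp Require Import all_boot.
From mathcomp Require zify.
Set Implicit Arguments. Unset Strict Implicit. Unset Printing Implicit Defensive.

Module Aux.
Import zify.

Lemma within_refl G k u : within G k u u.
Proof. by case: k => [|k] /=; rewrite eqxx. Qed.

Lemma within_mono G a b u v : a <= b -> within G a u v -> within G b u v.
Proof.
elim: a b u => [|a IH] [|b] u //=.
- by rewrite orbF => _ /eqP ->; rewrite eqxx.
- move=> ab /orP [->//|/hasP [w wu Hw]]; apply/orP; right.
  by apply/hasP; exists w => //; apply: IH Hw.
Qed.

Lemma within_trans G a b u w v :
  within G a u w -> within G b w v -> within G (a + b) u v.
Proof.
elim: a u => [|a IH] u.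
- by rewrite /= orbF => /eqP ->.
- move=> Ha Hb; move: Ha; rewrite [within _ a.+1 _ _]/= => /orP [/eqP Ez|/hasP [z zu Hz]].
  + by rewrite Ez in Hb; apply: (within_mono _ Hb); lia.
  + rewrite addSn /=; apply/orP; right; apply/hasP; exists z => //; exact: IH.
Qed.

Lemma within_adj G u w : w \in pg_adj G u -> within G 1 u w.
Proof. by move=> h /=; apply/orP; right; apply/hasP; exists w; rewrite //= eqxx. Qed.

Lemma within_sym G k u v :
  (forall u w, w \in pg_adj G u -> u \in pg_adj G w) ->
  within G k u v -> within G k v u.
Proof.
move=> sym; elim: k u => [|k IH] u /=.
- by rewrite orbF => /eqP ->; rewrite eqxx.
- move=> /orP [/eqP ->|/hasP [z zu Hz]]; first by rewrite eqxx.
  have := within_trans (IH _ Hz) (within_adj (sym _ _ zu)).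
  by rewrite addn1.
Qed.

Lemma within_level G (l : nat -> nat) k u v :
  (forall u w, w \in pg_adj G u -> l w <= l u + 1) ->
  within G k u v -> l v <= l u + k.
Proof.
move=> Hl; elim: k u => [|k IH] u /=.
- by rewrite orbF => /eqP ->; lia.
- move=> /orP [/eqP ->|/hasP [z zu Hz]]; first by lia.
  have := IH _ Hz; have := Hl _ _ zu; lia.
Qed.


Definition adjB (k m : nat) (p t : bool) (x : nat) : seq (nat * bool) :=
  if x == 0 then
    [:: (1, false), (2, t), (3, false), (if p then (0, true) else (3, true)),
        (4, false) & [seq (y, false) | y <- iota (k + 4) (m - (k + 4))]]
  else if x == 1 then [:: (0, false); (2, false)]
  else if x == 2 then [:: (1, false); (0, t)]
  else if x == 3 then (if p then [:: (0, false)] else [:: (0, false); (0, true)])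
  else if x < k + 4 then
    (if x == 4 then 0 else x.-1, false) ::
      (if x.+1 < k + 4 then [:: (x.+1, false)] else [::])
  else if x < m then [:: (0, false)]
  else [::].

Definition lift (s : bool) (e : nat * bool) : nat := (s (+) e.2) + e.1.*2.

Definition adjG k m p t (v : nat) : seq nat :=
  map (lift (odd v)) (adjB k m p t v./2).

Definition Gr k m p t := PG m.*2 (adjG k m p t).

Lemma lift_half s e : (lift s e)./2 = e.1.
Proof. by rewrite /lift half_bit_double. Qed.

Lemma lift_odd s e : odd (lift s e) = s (+) e.2.
Proof. by rewrite /lift oddD odd_double addbF oddb. Qed.

Lemma lift_inj s : injective (lift s).
Proof.
move=> [y c] [y' c'] h.
have h1 := congr1 half h; have h2 := congr1 odd h.
rewrite !lift_half /= in h1; rewrite !lift_odd /= in h2.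
by rewrite h1 (addbI h2).
Qed.

Lemma lift_node s u : lift (odd u (+) s) (u./2, s) = u.
Proof. by rewrite /lift /= addbK odd_double_half. Qed.

Lemma adjBS k m p t x : 4 <= x -> x < k + 4 ->
  adjB k m p t x = (if x == 4 then 0 else x.-1, false) ::
      (if x.+1 < k + 4 then [:: (x.+1, false)] else [::]).
Proof. by case: x => [|[|[|[|x]]]] // _ h; rewrite /adjB /= h. Qed.

Lemma adjBL k m p t x : k + 4 <= x -> x < m -> adjB k m p t x = [:: (0, false)].
Proof.
case: x => [|[|[|[|x]]]] h1 h2; try (exfalso; lia).
by rewrite /adjB /= ltnNge h1 /= h2.
Qed.

Lemma adjBO k m p t x : k + 4 <= m -> m <= x -> adjB k m p t x = [::].
Proof.
case: x => [|[|[|[|x]]]] h1 h2; try (exfalso; lia).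
rewrite /adjB /=.
have -> : (x.+4 < k + 4) = false by lia.
by rewrite ltnNge h2.
Qed.


Variant xspec k m (x : nat) : Prop :=
| X0 of x = 0 | X1 of x = 1 | X2 of x = 2 | X3 of x = 3
| XS of 4 <= x & x < k + 4 | XL of k + 4 <= x & x < m | XO of m <= x.

Lemma xP k m x : k + 4 <= m -> xspec k m x.
Proof.
move=> km; case: x => [|[|[|[|x]]]]; [exact: X0|exact: X1|exact: X2|exact: X3|].
case: (ltnP x.+4 (k + 4)) => h1; first by apply: XS.
case: (ltnP x.+4 m) => h2; first by apply: XL.
exact: XO.
Qed.

Definition tl k m := [seq (y, false) | y <- iota (k + 4) (m - (k + 4))].

Lemma adjB0 k m p t : adjB k m p t 0 =
  [:: (1, false), (2, t), (3, false), (if p then (0, true) else (3, true)),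
        (4, false) & tl k m].
Proof. by []. Qed.
Lemma adjB1 k m p t : adjB k m p t 1 = [:: (0, false); (2, false)].
Proof. by []. Qed.
Lemma adjB2 k m p t : adjB k m p t 2 = [:: (1, false); (0, t)].
Proof. by []. Qed.
Lemma adjB3 k m p t : adjB k m p t 3 =
  (if p then [:: (0, false)] else [:: (0, false); (0, true)]).
Proof. by []. Qed.

Lemma mem_tl k m e : k + 4 <= m ->
  (e \in tl k m) = (~~ e.2) && (k + 4 <= e.1 < m).
Proof.
move=> km; case: e => y c /=; apply/mapP/idP.
- by move=> [z]; rewrite mem_iota => hz [-> ->] /=; lia.
- move=> /andP [hc hy]; exists y; first by rewrite mem_iota; lia.
  by move: hc; case: c.
Qed.

Lemma adjB4 k m p t : 1 <= k -> adjB k m p t 4 =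
  (0, false) :: (if 5 < k + 4 then [:: (5, false)] else [::]).
Proof. by move=> hk; rewrite adjBS //; lia. Qed.

Lemma adjB_bound k m p t x : 1 <= k -> k + 4 <= m ->
  forall e, e \in adjB k m p t x -> e.1 < m.
Proof.
move=> hk km e; case: (xP x km) => [->|->|->|->|h1 h2|h1 h2|h].
- rewrite adjB0 !inE mem_tl //.
  by case: p; move=> /or3P [/eqP->|/eqP->|/or3P [/eqP->|/eqP->|/orP [/eqP->|/andP [_ /andP [_ ->]]]]] //=; lia.
- by rewrite adjB1 !inE => /orP [/eqP->|/eqP->] /=; lia.
- by rewrite adjB2 !inE => /orP [/eqP->|/eqP->] /=; lia.
- rewrite adjB3; case: p; rewrite !inE ?orbF; first by move=> /eqP-> /=; lia.
  by move=> /orP [/eqP->|/eqP->] /=; lia.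
- rewrite adjBS // inE => /orP [/eqP->|] /=; first by case: ifP; lia.
  by case: ifP => // h3; rewrite inE => /eqP-> /=; lia.
- by rewrite adjBL // inE => /eqP-> /=; lia.
- by rewrite adjBO.
Qed.


Lemma uniq_tl k m : uniq (tl k m).
Proof. by rewrite map_inj_uniq ?iota_uniq // => y z [->]. Qed.

Lemma adjB_uniq k m p t x : 1 <= k -> k + 4 <= m -> uniq (adjB k m p t x).
Proof.
move=> hk km; case: (xP x km) => [->|->|->|->|h1 h2|h1 h2|h].
- rewrite adjB0 /= !inE !mem_tl //= uniq_tl andbT.
  by case: p; case: t => /=; lia.
- by rewrite adjB1.
- by rewrite adjB2; case: t.
- by rewrite adjB3; case: p.
- rewrite adjBS //=; case: ifP => ?; case: ifP => ? //=; rewrite ?inE ?andbT ?xpair_eqE; lia.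
- by rewrite adjBL.
- by rewrite adjBO.
Qed.

Lemma adjB_noloop k m p t x : 1 <= k -> k + 4 <= m -> (x, false) \notin adjB k m p t x.
Proof.
move=> hk km; case: (xP x km) => [->|->|->|->|h1 h2|h1 h2|h].
- rewrite adjB0 !inE mem_tl //=; case: p; case: t => /=; lia.
- by rewrite adjB1.
- by rewrite adjB2; case: t.
- by rewrite adjB3; case: p.
- rewrite adjBS // inE; case: ifP => _; rewrite ?inE ?xpair_eqE; case: ifP => _; rewrite ?inE ?xpair_eqE /= ?in_nil ?orbF ?andbT; lia.
- by rewrite adjBL // inE xpair_eqE /= andbT; lia.
- by rewrite adjBO.
Qed.

Lemma adjB_sym k m p t x e : 1 <= k -> k + 4 <= m ->
  e \in adjB k m p t x -> (x, e.2) \in adjB k m p t e.1.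
Proof.
move=> hk km; case: (xP x km) => [->|->|->|->|h1 h2|h1 h2|h].
- rewrite adjB0 !inE mem_tl //.
  move=> /or3P [/eqP->|/eqP->|/or3P [/eqP->|/eqP->|/orP [/eqP->|/andP [he /andP [h1 h2]]]]].
  + by [].
  + by rewrite adjB2 !inE eqxx orbT.
  + by case: p.
  + by case: p; rewrite /= ?adjB0 ?adjB3 !inE.
  + by rewrite /= adjB4.
  + by rewrite adjBL // inE xpair_eqE /=; move: he; case: (e.2).
- rewrite adjB1 !inE => /orP [/eqP->|/eqP->] /=.
  + by rewrite adjB0 !inE.
  + by rewrite adjB2 !inE.
- rewrite adjB2 !inE => /orP [/eqP->|/eqP->] /=.
  + by rewrite adjB1 !inE.
  + by rewrite adjB0 !inE eqxx orbT.
- rewrite adjB3; case: p; rewrite !inE ?orbF.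
  + by move=> /eqP-> /=; rewrite adjB0 !inE.
  + by move=> /orP [/eqP->|/eqP->] /=; rewrite adjB0 !inE.
- rewrite adjBS // inE => /orP [/eqP->|] /=.
  + case: ifP => [/eqP->|h4].
    * by rewrite adjB0 !inE eqxx !orbT.
    * rewrite adjBS; try lia.
      rewrite inE; apply/orP; right.
      have -> : x.-1.+1 = x by lia.
      by rewrite h2 inE.
  + case: ifP => // h3; rewrite inE => /eqP-> /=.
    rewrite adjBS; try lia.
    have -> : (x.+1 == 4) = false by lia.
    by rewrite inE /= eqxx.
- rewrite adjBL // inE => /eqP-> /=.
  by rewrite adjB0 !inE mem_tl // h1 h2 /= !orbT.
- by rewrite adjBO.
Qed.


Definition dd (p : bool) := if p then 1 else 2.

Definition levB k p x (s : bool) :=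
  if (4 <= x) && (x < k + 4) then (if s then k + dd p + (x - 3) else k - (x - 3))
  else if ((x == 2) || (x == 3)) && ~~ p then k + 1
  else k + (if s then dd p else 0).

Ltac fin := rewrite /levB /dd /=; repeat (case: ifP => /= ?); lia.

Lemma adjB_lev k m p t x s e : 1 <= k -> k + 4 <= m ->
  e \in adjB k m p t x -> levB k p e.1 (s (+) e.2) <= levB k p x s + 1.
Proof.
move=> hk km; case: (xP x km) => [->|->|->|->|h1 h2|h1 h2|h].
- rewrite adjB0 !inE mem_tl //.
  move=> /or3P [/eqP->|/eqP->|/or3P [/eqP->|/eqP->|/orP [/eqP->|/andP [he /andP [h1 h2]]]]].
  + by case: s; case: p; fin.
  + by case: s; case: p; case: t; fin.
  + by case: s; case: p; fin.
  + by case: s; case: p; fin.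
  + by case: s; case: p; fin.
  + move: he h1 h2; case: e => y c /= he h1 h2; move: he; case: c => // _; case: s; case: p; fin.
- rewrite adjB1 !inE => /orP [/eqP->|/eqP->]; by case: s; case: p; fin.
- rewrite adjB2 !inE => /orP [/eqP->|/eqP->]; by case: s; case: p; case: t; fin.
- rewrite adjB3; case: p; rewrite !inE ?orbF.
  + by move=> /eqP->; case: s; fin.
  + by move=> /orP [/eqP->|/eqP->]; case: s; fin.
- rewrite adjBS // inE => /orP [/eqP->|].
  + by case: ifP => ?; case: s; case: p; fin.
  + case: ifP => // h3; rewrite inE => /eqP->.
    by case: s; case: p; fin.
- rewrite adjBL // inE => /eqP->.
  by case: s; case: p; fin.
- by rewrite adjBO.
Qed.

End Aux.

Module Aux2.
Import zify Aux.

Definition chiB k p x (s : bool) : nat :=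
  let A := if s then (if p then 1 else 2) else 0 in
  if x == 0 then A
  else if x == 1 then (if p then (if s then 2 else 4) else (if s then 3 else 4))
  else if x == 2 then (if p then (if s then 1 else 0) else (if s then 4 else 3))
  else if x == 3 then (if p then A + 1 else 1)
  else if x < k + 4 then (if odd (x - 3) then A + 1 else A)
  else A + 1.

Definition c5 (a b : nat) := (b == a.+1 %% 5) || (a == b.+1 %% 5).

Ltac fin2 := rewrite /c5 /chiB /=; repeat (case: ifP => /= ?); lia.

Lemma adjB_chi k m p x s e : 1 <= k -> k + 4 <= m ->
  e \in adjB k m p true x -> c5 (chiB k p x s) (chiB k p e.1 (s (+) e.2)).
Proof.
move=> hk km; case: (xP x km) => [->|->|->|->|h1 h2|h1 h2|h].
- rewrite adjB0 !inE mem_tl //.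
  move=> /or3P [/eqP->|/eqP->|/or3P [/eqP->|/eqP->|/orP [/eqP->|/andP [he /andP [h1 h2]]]]].
  + by case: s; case: p; fin2.
  + by case: s; case: p; fin2.
  + by case: s; case: p; fin2.
  + by case: s; case: p; fin2.
  + by case: s; case: p; fin2.
  + move: he h1 h2; case: e => y c /= he h1 h2; move: he; case: c => // _; case: s; case: p; fin2.
- rewrite adjB1 !inE => /orP [/eqP->|/eqP->]; by case: s; case: p; fin2.
- rewrite adjB2 !inE => /orP [/eqP->|/eqP->]; by case: s; case: p; fin2.
- rewrite adjB3; case: p; rewrite !inE ?orbF.
  + by move=> /eqP->; case: s; fin2.
  + by move=> /orP [/eqP->|/eqP->]; case: s; fin2.
- rewrite adjBS // inE => /orP [/eqP->|].
  + by case: ifP => ?; case: s; case: p; fin2.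
  + case: ifP => // h3; rewrite inE => /eqP->.
    by case: s; case: p; fin2.
- rewrite adjBL // inE => /eqP->.
  by case: s; case: p; fin2.
- by rewrite adjBO.
Qed.


Lemma adjB_indep k m p t1 t2 y : y != 0 -> y != 2 ->
  adjB k m p t1 y = adjB k m p t2 y.
Proof. by move=> y0 y2; rewrite /adjB (negbTE y0) (negbTE y2). Qed.

Lemma idx_same k m p t1 t2 x c y : x != 0 -> x != 2 ->
  index (x, c) (adjB k m p t1 y) = index (x, c) (adjB k m p t2 y).
Proof.
move=> x0 x2.
case: (eqVneq y 0) => [->|y0].
  rewrite !adjB0 /= !xpair_eqE.
  by have -> : (2 == x) = false by lia.
case: (eqVneq y 2) => [->|y2].
  rewrite !adjB2 /= !xpair_eqE.
  by have -> : (0 == x) = false by lia.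
by rewrite (adjB_indep _ _ _ t1 t2 y0 y2).
Qed.

Definition Qr k m p t1 t2 x (e1 e2 : nat * bool) :=
  (e1.1 == e2.1) &&
  (index (x, e1.2) (adjB k m p t1 e1.1) == index (x, e2.2) (adjB k m p t2 e2.1)).

Lemma all2_refl (T : eqType) (Q : T -> T -> bool) (l : seq T) :
  (forall e, e \in l -> Q e e) -> all2 Q l l.
Proof.
elim: l => //= a l IH H; rewrite H ?inE ?eqxx //=.
by apply: IH => e he; apply: H; rewrite inE he orbT.
Qed.

Lemma adjB_all2 k m p t1 t2 x : 1 <= k ->
  all2 (Qr k m p t1 t2 x) (adjB k m p t1 x) (adjB k m p t2 x).
Proof.
move=> hk.
case: (eqVneq x 0) => [->|x0].
  rewrite !adjB0 /= /Qr /=.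
  rewrite (adjB_indep _ _ _ t1 t2 (y := 4)) //.
  rewrite (adjB_indep _ _ _ t1 t2 (y := 3)) // !eqxx /=.
  have -> : index (0, (if p then (0, true) else (3, true)).2)
      (adjB k m p t1 (if p then (0, true) else (3, true)).1) ==
    index (0, (if p then (0, true) else (3, true)).2)
      (adjB k m p t2 (if p then (0, true) else (3, true)).1).
    by case: p; rewrite ?adjB0 ?adjB3 //=; case: t1; case: t2.
  apply: all2_refl => e; rewrite /tl => /mapP [y]; rewrite mem_iota => hy -> /=.
  by rewrite (adjB_indep _ _ _ t1 t2 (y := y)) ?eqxx //; lia.
case: (eqVneq x 2) => [->|x2].
  rewrite !adjB2 /= /Qr /= !eqxx /=.
  by rewrite ?adjB0 /=; case: t1; case: t2.
rewrite (adjB_indep _ _ _ t1 t2 x0 x2); apply: all2_refl => e _.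
by rewrite /Qr eqxx (idx_same _ _ _ t1 t2) // eqxx.
Qed.

End Aux2.

Module Aux3.
Import zify Aux Aux2.

Lemma adjGP k m p t u w : w \in adjG k m p t u ->
  exists2 e, e \in adjB k m p t u./2 & w = lift (odd u) e.
Proof. by move/mapP. Qed.

Lemma adjG_f k m p t u e : e \in adjB k m p t u./2 -> lift (odd u) e \in adjG k m p t u.
Proof. by move=> h; apply: map_f. Qed.

Lemma adjG_lift k m p t s e :
  adjG k m p t (lift s e) = map (lift (s (+) e.2)) (adjB k m p t e.1).
Proof. by rewrite /adjG lift_half lift_odd. Qed.

Lemma Gsym k m p t u w : 1 <= k -> k + 4 <= m ->
  w \in pg_adj (Gr k m p t) u -> u \in pg_adj (Gr k m p t) w.
Proof.
move=> hk km /= /adjGP [e he ->]; rewrite adjG_lift.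
rewrite -{1}(lift_node (e.2) u); apply: map_f.
exact: adjB_sym.
Qed.

Lemma lift0 s c : lift s (0, c) = s (+) c.
Proof. by case: s; case: c. Qed.

Lemma spine_within k m p t s i : 1 <= k -> k + 4 <= m -> 1 <= i <= k ->
  within (Gr k m p t) i (lift s (i + 3, false)) s.
Proof.
move=> hk km; elim: i => [|i IH] // /andP [hi1 hik].
case: (eqVneq i 0) => [->|i0].
  apply: within_adj => /=; rewrite adjG_lift /= adjB4 //.
  by rewrite inE; apply/orP; left; rewrite /lift /= double0 addn0; clear IH; case: s.
have := IH ltac:(lia).
apply: (within_trans (a := 1) (b := i)).
apply: within_adj => /=; rewrite adjG_lift /= adjBS; try lia.
have -> : (i.+1 + 3 == 4) = false by lia.
by rewrite inE /= addbF; apply/orP; left; apply/eqP; congr (_ + _); congr double; lia.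
Qed.

Lemma hub k m p t u : 1 <= k -> k + 4 <= m -> u < m.*2 ->
  exists s : bool, within (Gr k m p t) k u s.
Proof.
move=> hk km hu.
have eu : u = lift (odd u) (u./2, false) by rewrite -{1}(lift_node false u) addbF.
have ad : forall e, e \in adjB k m p t u./2 -> within (Gr k m p t) k u (lift (odd u) e).
  move=> e he; apply: (within_mono (a := 1)) => //.
  by apply: within_adj => /=; apply: adjG_f.
case: (xP u./2 km) => [h|h|h|h|h1 h2|h1 h2|h].
- exists (odd u); rewrite {1}eu h lift0; case: (odd u); exact: within_refl.
- exists (odd u); have := ad (0, false); rewrite h adjB1 inE eqxx lift0.
  by case: (odd u); apply.
- exists (odd u (+) t); have := ad (0, t); rewrite h adjB2 !inE eqxx orbT lift0.
  by apply.
- exists (odd u); have := ad (0, false); rewrite h lift0.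
  have -> : (0, false) \in adjB k m p t 3 by rewrite adjB3; clear ad; case: p; rewrite !inE eqxx.
  by case: (odd u); apply.
- exists (odd u).
  have := spine_within p t (odd u) (i := u./2 - 3) hk km ltac:(lia).
  have -> : u./2 - 3 + 3 = u./2 by lia.
  rewrite -eu => H; apply: (within_mono _ H); lia.
- exists (odd u); have := ad (0, false); rewrite adjBL // inE eqxx lift0.
  by case: (odd u); apply.
- exfalso; lia.
Qed.

Lemma hub_hub k m p t (s1 s2 : bool) : 1 <= k -> k + 4 <= m ->
  within (Gr k m p t) (dd p) s1 s2.
Proof.
move=> hk km.
have h01 : within (Gr k m p t) (dd p) false true.
  case: p; rewrite /dd.
  + by apply: within_adj; rewrite /= /adjG /= !inE eqxx !orbT.
  + apply: (within_trans (a := 1) (b := 1) (w := 6)); apply: within_adj => //=.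
    by rewrite /adjG /= !inE eqxx !orbT.
case: s1; case: s2 => //; try exact: within_refl.
by apply: within_sym h01 => u w; apply: Gsym.
Qed.

Lemma G_within k m p t u v : 1 <= k -> k + 4 <= m -> u < m.*2 -> v < m.*2 ->
  within (Gr k m p t) (k + dd p + k) u v.
Proof.
move=> hk km hu hv.
have [s1 h1] := hub p t hk km hu.
have [s2 h2] := hub p t hk km hv.
apply: (within_trans (within_trans h1 (hub_hub p t s1 s2 hk km))).
by apply: within_sym h2 => x y; apply: Gsym.
Qed.

Definition lev k p v := levB k p v./2 (odd v).

Lemma G_lower k m p t : 1 <= k -> k + 4 <= m ->
  ~~ within (Gr k m p t) (k + dd p + k).-1 (lift false (k + 3, false)) (lift true (k + 3, false)).
Proof.
move=> hk km; apply/negP => hw.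
have := within_level (l := lev k p) _ hw.
have -> : lev k p (lift false (k + 3, false)) = 0.
  rewrite /lev lift_half lift_odd /levB /=.
  have -> : (3 < k + 3) && (k + 3 < k + 4) by lia.
  lia.
have -> : lev k p (lift true (k + 3, false)) = k + dd p + k.
  rewrite /lev lift_half lift_odd /levB /=.
  have -> : (3 < k + 3) && (k + 3 < k + 4) by lia.
  lia.
have dp : 1 <= dd p by rewrite /dd; case: (p).
suff : (forall u w, w \in pg_adj (Gr k m p t) u -> lev k p w <= lev k p u + 1) by move=> /[swap] /[apply]; lia.
move=> u w /= /adjGP [e he ->].
rewrite /lev lift_half lift_odd; exact: (adjB_lev (odd u) hk km he).
Qed.

Lemma G_valid k m p t : 1 <= k -> k + 4 <= m -> valid_pgraph (Gr k m p t).
Proof.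
move=> hk km; split; first by rewrite /=; lia.
split.
- move=> v hv /=; split.
  + apply/allP => w /adjGP [e he ->].
    have := adjB_bound hk km he; rewrite /lift; case: (_ (+) _) => /=; lia.
  + by rewrite map_inj_uniq ?adjB_uniq //; apply: lift_inj.
  + rewrite -{1}(lift_node false v) addbF mem_map; last exact: lift_inj.
    exact: adjB_noloop.
  + by move=> u; apply: (Gsym (u := v)).
- move=> u v hu hv; apply: (within_mono (a := k + dd p + k)); last exact: G_within.
  rewrite /dd /=; case: (p); lia.
Qed.

End Aux3.

Module Aux4.
Import zify Aux Aux2 Aux3.

Lemma map_all2 (T1 T2 R : Type) (f : T1 -> R) (g : T2 -> R) (Q : T1 -> T2 -> bool) l1 l2 :
  all2 Q l1 l2 -> (forall a b, Q a b -> f a = g b) -> map f l1 = map g l2.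
Proof.
elim: l1 l2 => [|a l1 IH] [|b l2] //= /andP [hab hl] H.
by rewrite (H _ _ hab) (IH _ hl H).
Qed.

Lemma index_adjG k m p t u e :
  index u (adjG k m p t (lift (odd u) e)) = index (u./2, e.2) (adjB k m p t e.1).
Proof.
rewrite adjG_lift -{1}(lift_node e.2 u) index_map //; exact: lift_inj.
Qed.

Lemma run_eq S M (A : LocalAlg S M) k m p t1 t2 T : 1 <= k ->
  forall u1 u2, u1./2 = u2./2 ->
  run A (Gr k m p t1) (fun _ => [::]) T u1 = run A (Gr k m p t2) (fun _ => [::]) T u2.
Proof.
move=> hk; elim: T => [|T IH] u1 u2 hu /=.
  rewrite /adjG !size_map hu.
  by have := @adjB_all2 k m p t1 t2 u2./2 hk; rewrite all2E => /andP [/eqP -> _].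
rewrite (IH u1 u2 hu) /adjG -!map_comp hu.
congr (la_step _ _ _).
apply: map_all2 (@adjB_all2 k m p t1 t2 u2./2 hk) _ => e1 e2 /andP [/eqP h1 /eqP h2] /=.
have E1 := index_adjG k m p t1 u1 e1.
have E2 := index_adjG k m p t2 u2 e2.
rewrite /adjG in E1 E2; rewrite E1 E2 hu h2.
by congr la_msg; apply: IH; rewrite !lift_half h1.
Qed.


Lemma chiB_lt k p x s : chiB k p x s < 5.
Proof. rewrite /chiB; case: s; case: p; repeat (case: ifP => ? /=); lia. Qed.

Lemma c5_notri a b c : a < 5 -> b < 5 -> c < 5 -> c5 a b -> c5 b c -> c5 c a -> False.
Proof. rewrite /c5 => ha hb hc; lia. Qed.

Lemma adjG_bound k m p t u w : 1 <= k -> k + 4 <= m -> w \in adjG k m p t u -> w < m.*2.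
Proof.
move=> hk km /adjGP [e he ->].
have := adjB_bound hk km he; rewrite /lift; case: (_ (+) _) => /=; lia.
Qed.

Lemma adjG_chi k m p u v : 1 <= k -> k + 4 <= m -> v \in adjG k m p true u ->
  c5 (chiB k p u./2 (odd u)) (chiB k p v./2 (odd v)).
Proof.
move=> hk km /adjGP [e he ->]; rewrite lift_half lift_odd.
exact: (adjB_chi (odd u) hk km he).
Qed.

Lemma notri k m p u v w : 1 <= k -> k + 4 <= m ->
  v \in adjG k m p true u -> w \in adjG k m p true v -> u \in adjG k m p true w -> False.
Proof.
move=> hk km h1 h2 h3.
apply: (c5_notri (chiB_lt k p u./2 (odd u)) (chiB_lt k p v./2 (odd v)) (chiB_lt k p w./2 (odd w))).
- exact: adjG_chi h1.
- exact: adjG_chi h2.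
- exact: adjG_chi h3.
Qed.

Lemma noniso k m p H : 1 <= k -> k + 4 <= m ->
  pg_iso (Gr k m p false) H -> pg_iso (Gr k m p true) H -> False.
Proof.
move=> hk km [n1 [f [fr finj fadj]]] [n2 [g [gr ginj gadj]]].
rewrite /= in n1 n2 fr finj fadj gr ginj gadj.
set N := m.*2 in n1 n2 fr finj fadj gr ginj gadj.
have N5 : 4 < N by rewrite /N; lia.
have tri : forall a b, a < N -> b \in adjG k m p false a -> f b \in pg_adj H (f a).
  by move=> a b ha hb; rewrite fadj // map_f.
have surj : forall y, y < N -> exists2 z, z < N & g z = y.
  move=> y hy.
  have u1 : uniq (map g (iota 0 N)).
    rewrite map_inj_in_uniq ?iota_uniq // => a b; rewrite !mem_iota => ha hb.
    by apply: ginj; lia.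
  have s1 : {subset map g (iota 0 N) <= iota 0 N}.
    by move=> z /mapP [x hx ->]; rewrite mem_iota add0n; apply: gr; move: hx; rewrite mem_iota; lia.
  have [_ E] := uniq_min_size u1 s1 (eq_leq (esym (size_map g _))).
  have : y \in iota 0 N by rewrite mem_iota; lia.
  rewrite -E => /mapP [z hz ->]; exists z => //; move: hz; rewrite mem_iota; lia.
have back : forall a b, a < N -> b < N -> g b \in pg_adj H (g a) -> b \in adjG k m p true a.
  move=> a b ha hb; rewrite gadj // => /mapP [c hc e].
  have hcN : c < N by apply: (adjG_bound hk km hc).
  by rewrite (ginj _ _ hb hcN e).
have [z0 h0 e0] := surj (f 0) (fr 0 ltac:(lia)).
have [z2 h2 e2] := surj (f 2) (fr 2 ltac:(lia)).
have [z4 h4 e4] := surj (f 4) (fr 4 ltac:(lia)).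
apply: (notri hk km (u := z0) (v := z2) (w := z4)).
- apply: back => //; rewrite e0 e2; apply: tri => //; lia.
- apply: back => //; rewrite e2 e4; apply: tri => //; lia.
- apply: back => //; rewrite e4 e0; apply: tri => //; lia.
Qed.

End Aux4.

Module Aux5.
Import zify Aux Aux2 Aux3 Aux4.

Lemma main_aux (D n : nat) :
  3 <= D -> D + 6 <= n -> ~~ odd n ->
  forall (S M : Type) (A : LocalAlg S M),
  ~ (forall G : PGraph, valid_pgraph G -> pg_n G = n -> has_diameter G D ->
       solves_TR A G (fun _ => [::])).
Proof.
move=> hD hn hodd S M A Hall.
pose k := (D.-1)./2; pose m := n./2; pose p := odd D.
have hk : 1 <= k by rewrite /k; lia.
have hkm : k + 4 <= m by rewrite /k /m; lia.
have hnm : m.*2 = n by rewrite /m; lia.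
have hDk : D = k + dd p + k by rewrite /k /p /dd; case: ifP => ?; lia.
have ok : forall t, solves_TR A (Gr k m p t) (fun _ => [::]).
  move=> t; apply: Hall.
  - exact: G_valid.
  - by [].
  - rewrite hDk; split.
    + by move=> u v hu hv; apply: G_within.
    + exists (lift false (k + 3, false)), (lift true (k + 3, false)); split.
      * rewrite /= /lift /=; lia.
      * rewrite /= /lift /=; lia.
      * exact: G_lower.
have n0 : 0 < pg_n (Gr k m p false) by rewrite /=; lia.
have [t1 [H1 [o1 b1 i1]]] := ok false 0 n0.
have [t2 [H2 [o2 b2 i2]]] := ok true 0 n0.
have R : forall T, run A (Gr k m p false) (fun _ => [::]) T 0 =
                   run A (Gr k m p true) (fun _ => [::]) T 0.
  by move=> T; apply: run_eq.
case: (ltngtP t1 t2) => ht.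
- by move: (b2 _ ht); rewrite -R o1.
- by move: (b1 _ ht); rewrite R o2.
- subst t2; move: o2; rewrite -R o1 => [[eH]]; subst H2.
  exact: (noniso hk hkm i1 i2).
Qed.

End Aux5.

Unset Implicit Arguments.

Theorem proposition3p2 (D n : nat) :
  3 <= D -> D + 6 <= n -> ~~ odd n ->
  forall (S M : Type) (A : LocalAlg S M),
  ~ (forall G : PGraph, valid_pgraph G -> pg_n G = n -> has_diameter G D ->
       solves_TR A G (fun _ => [::])).
Proof. exact: Aux5.main_aux. Qed.
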